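(* Let $n\ge 1$ and let $\beta=\beta^{(2n)}=(\beta_{ij})_{i,j\ge 0,\ i+j\le 2n}$ be a real truncated moment sequence with moment matrix $\mathcal M(n)(\beta)$. Let $r=\operatorname{rank}\mathcal M(n)(\beta)$ and $v=\operatorname{card}\mathcal V(\mathcal M(n)(\beta))$, and assume $v<\infty$ and $v=r$. Then $\beta$ admits a representing measure if and only if $\mathcal M(n)(\beta)$ has a positive semidefinite moment matrix extension $\mathcal M(n+1)$ satisfying $\operatorname{rank}\mathcal M(n+1)\le \operatorname{card}\mathcal V(\mathcal M(n+1))$.
   Context: For a real sequence $\gamma=(\gamma_{ij})_{i,j\ge0,\ i+j\le 2m}$, the moment matrix $\mathcal M(m)(\gamma)$ has rows and columns indexed by the monomials $1,X,Y,X^2,XY,Y^2,\dots,X^m,\dots,Y^m$ (degree-lexicographic order), the entry in row $X^iY^j$ and column $X^kY^l$ being $\gamma_{i+k,j+l}$. For a polynomial $p(x,y)=\sum a_{ij}x^iy^j$ of degree at most $m$, $p(X,Y)$ denotes the corresponding linear combination $\sum a_{ij}X^iY^j$ of columns of $\mathcal M(m)$. The algebraic variety of $\mathcal M(m)$ is $\mathcal V(\mathcal M(m))=\bigcap\{\mathcal Z(p): \deg p\le m,\ p(X,Y)=\mathbf 0\}$, where $\mathcal Z(p)=\{(x,y)\in\mathbb R^2: p(x,y)=0\}$. A representing measure for $\beta$ is a positive Borel measure $\mu$ on $\mathbb R^2$ with $\beta_{ij}=\int x^iy^j\,d\mu$ for all $i+j\le 2n$. A moment matrix extension $\mathcal M(n+1)$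 of $\mathcal M(n)(\beta)$ is a matrix $\mathcal M(n+1)(\tilde\beta)$ for some real sequence $\tilde\beta$ of degree $2n+2$ with $\tilde\beta_{ij}=\beta_{ij}$ for $i+j\le 2n$. *)

(* Defs.v *)
From HB Require Import structures.
From mathcomp Require Import all_boot all_order all_algebra.
From mathcomp Require Import all_classical all_reals all_analysis.
Set Implicit Arguments. Unset Strict Implicit. Unset Printing Implicit Defensive.
Import Order.TTheory GRing.Theory Num.Theory.
Local Open Scope classical_set_scope.
Local Open Scope ring_scope.

(* Monomials X^i Y^j of degree <= m, in degree-lexicographic order:
   1, X, Y, X^2, XY, Y^2, ..., X^m, ..., Y^m; a pair (i,j) stands for X^i Y^j. *)
Definition monos (m : nat) : seq (nat * nat) :=
  flatten [seq [seq (d - k, k)%N | k <- iota 0 d.+1] | d <- iota 0 m.+1].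

Definition mdim (m : nat) : nat := size (monos m).

Definition mon (m : nat) (a : 'I_(mdim m)) : nat * nat := nth (0%N, 0%N) (monos m) a.

Section Moment.
Variable R : realType.

Definition moment_matrix (m : nat) (g : nat -> nat -> R) : 'M[R]_(mdim m) :=
  \matrix_(a, b) g ((mon a).1 + (mon b).1)%N ((mon a).2 + (mon b).2)%N.

(* The polynomial with coefficient vector c (coefficient of X^i Y^j at the
   index of (i,j)), evaluated at (x,y).  Such polynomials are exactly those
   of degree <= m; p(X,Y) is then  M *m c. *)
Definition peval (m : nat) (c : 'cV[R]_(mdim m)) (x y : R) : R :=
  \sum_a c a 0 * x ^+ (mon a).1 * y ^+ (mon a).2.

Definition variety (m : nat) (M : 'M[R]_(mdim m)) : set (R * R) :=
  [set p | forall c : 'cV[R]_(mdim m), M *m c = 0 -> peval c p.1 p.2 = 0].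

Definition psd (k : nat) (M : 'M[R]_k) : Prop :=
  M^T = M /\ forall x : 'cV[R]_k, 0 <= (x^T *m M *m x) 0 0.

End Moment.

Definition vcard_eq (T : eqType) (A : set T) (k : nat) : Prop :=
  exists s : seq T, [/\ uniq s, [set` s] = A & size s = k].

(* k <= card A (cardinality possibly infinite) *)
Definition vcard_ge (T : eqType) (A : set T) (k : nat) : Prop :=
  exists s : seq T, [/\ uniq s, [set` s] `<=` A & size s = k].

Definition rep_measure (R : realType) (n : nat) (beta : nat -> nat -> R)
  (mu : {measure set (R * R) -> \bar R}) : Prop :=
  forall i j : nat, (i + j <= 2 * n)%N ->
    mu.-integrable setT (fun p : R * R => (p.1 ^+ i * p.2 ^+ j)%:E) /\
    (\int[mu]_p (p.1 ^+ i * p.2 ^+ j)%:E = (beta i j)%:E)%E.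

(* Main.v *)
Require Import Defs.
From HB Require Import structures.
From mathcomp Require Import all_boot all_order all_algebra.
From mathcomp Require Import all_classical all_reals all_analysis.
From mathcomp Require Import measurable_realfun.
From mathcomp Require Import zify ring lra.
Import Order.TTheory GRing.Theory Num.Theory.
Local Open Scope classical_set_scope.
Local Open Scope ring_scope.

Lemma mem_monos m i j : ((i, j) \in monos m) = (i + j <= m)%N.
Proof.
apply/idP/idP.
  case/flattenP => s /mapP [d]; rewrite mem_iota => /andP[_ hd] -> /mapP [k].
  rewrite mem_iota => /andP[_ hk] [-> ->]. by rewrite subnK; lia.
move=> h; apply/flattenP; exists [seq ((i + j) - k, k)%N | k <- iota 0 (i + j).+1].
  apply/mapP; exists (i + j)%N => //; rewrite mem_iota; lia.
apply/mapP; exists j; first by rewrite mem_iota; lia.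
by rewrite addnK.
Qed.

Lemma monosS m : monos m.+1 = monos m ++ [seq (m.+1 - k, k)%N | k <- iota 0 m.+2].
Proof. rewrite /monos -[m.+2 in LHS]addn1 iotaD map_cat flatten_cat; congr (_ ++ _). by rewrite add0n /= cats0. Qed.

Lemma mdimS m : mdim m.+1 = (mdim m + m.+2)%N.
Proof. by rewrite /mdim monosS size_cat size_map size_iota. Qed.

Lemma mdim_le m : (mdim m <= mdim m.+1)%N.
Proof. by rewrite mdimS leq_addr. Qed.

Lemma mon_widen m (a : 'I_(mdim m)) :
  mon (widen_ord (mdim_le m) a) = mon a.
Proof. by rewrite /mon /= monosS nth_cat ltn_ord. Qed.

Lemma mon_deg m (a : 'I_(mdim m)) : ((mon a).1 + (mon a).2 <= m)%N.
Proof.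
have : mon a \in monos m by apply: mem_nth; exact: ltn_ord.
by case: (mon a) => i j; rewrite mem_monos.
Qed.

Lemma mon_ex m i j : (i + j <= m)%N -> exists a : 'I_(mdim m), mon a = (i, j).
Proof.
rewrite -mem_monos => h.
have hi : (index (i, j) (monos m) < mdim m)%N by rewrite /mdim index_mem.
by exists (Ordinal hi); rewrite /mon /= nth_index.
Qed.

Lemma mon0_ex m : exists a : 'I_(mdim m), mon a = (0, 0)%N.
Proof. exact: mon_ex. Qed.

Section Mat.
Variable R : realType.

Definition zv m (p : R * R) : 'cV[R]_(mdim m) :=
  \col_a (p.1 ^+ (mon a).1 * p.2 ^+ (mon a).2).

Lemma peval_zv m (c : 'cV[R]_(mdim m)) x y :
  peval c x y = ((zv m (x, y))^T *m c) 0 0.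
Proof.
rewrite /peval !mxE; apply: eq_bigr => a _; rewrite !mxE /=; ring.
Qed.

Lemma variety_sub m (M : 'M[R]_(mdim m)) p :
  variety M p <-> ((zv m p)^T <= M)%MS.
Proof.
split.
  move=> hv; rewrite submxE; apply/eqP/matrixP => i j.
  have hc : M *m col j (cokermx M) = 0 by rewrite colE mulmxA mulmx_coker mul0mx.
  have := hv _ hc; rewrite peval_zv -surjective_pairing => h.
  rewrite (ord1 i) [RHS]mxE -h [LHS]mxE [RHS]mxE; by apply: eq_bigr => k _; rewrite !mxE.
case/submxP => D hD c hc; rewrite peval_zv -surjective_pairing hD.
by rewrite -mulmxA hc mulmx0 mxE.
Qed.

Lemma moment_sym m g : (moment_matrix m g)^T = moment_matrix (R:=R) m g.
Proof. by apply/matrixP => a b; rewrite !mxE addnC [((mon b).2 + _)%N]addnC. Qed.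

Lemma sumsq_eq0 k (u : 'cV[R]_k) : (u^T *m u) 0 0 = 0 -> u = 0.
Proof.
rewrite mxE => /psumr_eq0P h; apply/matrixP => i j; rewrite (ord1 j) [RHS]mxE.
have hp : forall i0 : 'I_k, true -> 0 <= u^T 0 i0 * u i0 0 by move=> k0 _; rewrite mxE -expr2 sqr_ge0.
by have := h hp i isT; rewrite mxE -expr2 => /eqP; rewrite sqrf_eq0 => /eqP.
Qed.

Lemma psd_ker k (M : 'M[R]_k) (x : 'cV_k) : psd M -> (x^T *m M *m x) 0 0 = 0 -> M *m x = 0.
Proof.
case=> hs hp hx.
have key : forall y : 'cV_k, (y^T *m M *m x) 0 0 = 0.
  move=> y; set b := (y^T *m M *m x) 0 0; set a := (y^T *m M *m y) 0 0.
  have ha : 0 <= a by apply: hp.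
  have hsym : (x^T *m M *m y) 0 0 = b.
    have e : forall A : 'M[R]_1, A 0 0 = A^T 0 0 by move=> A; rewrite mxE.
    rewrite [LHS]e !trmx_mul trmxK hs mulmxA //.
  pose t := - b / (a + 1).
  have := hp (x + t *: y).
  have -> : (x + t *: y)^T = x^T + t *: y^T by apply/matrixP => i j; rewrite !mxE.
  have eD : forall (A B : 'M[R]_1), (A + B) 0 0 = A 0 0 + B 0 0 by move=> *; rewrite mxE.
  have eZ : forall c (A : 'M[R]_1), (c *: A) 0 0 = c * A 0 0 by move=> *; rewrite mxE.
  rewrite !mulmxDl -!scalemxAl !mulmxDr -!scalemxAr !(eD, eZ) -/b -/a hsym hx.
  have ht : t * (a + 1) = - b by rewrite /t; field; apply/lt0r_neq0; lra.
  move=> H.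
  have H2 : 0 <= (t * (a + 1)) ^+ 2 * a + 2 * (t * (a+1)) * b * (a + 1).
    have H1 : 0 <= (a + 1) ^+ 2 * (0 + t * b + t * (b + t * a)).
      by apply: mulr_ge0; [rewrite sqr_ge0 | exact: H].
    move: H1.
    by congr (_ <= _); ring.
  rewrite ht in H2.
  have H4 : b ^+ 2 <= 0 by nra.
  by apply/eqP; rewrite -sqrf_eq0 eq_le H4 sqr_ge0.
apply: sumsq_eq0.
have := key (M *m x); rewrite trmx_mul hs -mulmxA //.
Qed.


Lemma sup_of_rank k1 k2 N (A : 'M[R]_(k1, N)) (B : 'M[R]_(k2, N)) :
  (A <= B)%MS -> (\rank B <= \rank A)%N -> (B <= A)%MS.
Proof.
move=> h hr; have [h1 h2] := mxrank_leqif_sup h.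
by rewrite -h2 eqn_leq h1 hr.
Qed.

Definition mono (p : R * R) (e : nat * nat) : R := p.1 ^+ e.1 * p.2 ^+ e.2.

Lemma zvE m p a : zv m p a 0 = mono p (mon a).
Proof. by rewrite mxE. Qed.

Lemma monoD p e f : mono p (e.1 + f.1, e.2 + f.2)%N = mono p e * mono p f.
Proof. by rewrite /mono /= !exprD; ring. Qed.

Definition wd n := widen_ord (mdim_le n).

Lemma back_alg n (beta gamma : nat -> nat -> R) (s : seq (R * R)) :
  let M1 := moment_matrix n.+1 gamma in
  let M0 := moment_matrix n beta in
  (forall i j, (i + j <= 2 * n)%N -> gamma i j = beta i j) ->
  psd M1 -> uniq s -> (forall p, p \in s -> variety M1 p) ->
  size s = \rank M1 -> (\rank M1 <= \rank M0)%N ->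
  exists rho : 'I_(size s) -> R, (forall k, 0 < rho k) /\
    forall a b, M1 a b = \sum_k rho k * mono (nth 0 s k) (mon a) * mono (nth 0 s k) (mon b).
Proof.
move=> M1 M0 hgb hpsd hu hv hsz hrk.
set r := size s.
set W := rowsub (wd n) M1.
have hM0 : colsub (wd n) W = M0.
  apply/matrixP => a b; rewrite !mxE /wd !mon_widen; apply: hgb.
  have := @mon_deg n a; have := @mon_deg n b; lia.
have hWM : (W <= M1)%MS by apply: rowsub_sub.
have hrW : (\rank M1 <= \rank W)%N.
  apply: (leq_trans hrk); rewrite -hM0.
  by rewrite -[W in colsub _ W]mulmx1 -mulmx_colsub mxrankM_maxl.
have hMW : (M1 <= W)%MS by apply: (sup_of_rank _ _ _ _ _ hWM).
set Z : 'M[R]_(r, mdim n.+1) := \matrix_(k, b) mono (nth 0 s k) (mon b).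
have hZ : (Z <= W)%MS.
  apply/row_subP => k; apply: submx_trans hMW.
  have := hv (nth 0 s k) (mem_nth _ (ltn_ord k)); rewrite variety_sub.
  congr (_ <= _)%MS; apply/matrixP => i j; rewrite !mxE //.
have [Al hAl] := submxP hZ.
have hZW : forall k b', Z k b' = \sum_a Al k a *
    gamma ((mon a).1 + (mon b').1)%N ((mon a).2 + (mon b').2)%N.
  move=> k b'; rewrite hAl mxE; apply: eq_bigr => a _; rewrite !mxE /wd mon_widen //.
set G : 'M[R]_r := colsub (wd n) Z *m Al^T.
have hG : forall k l, G k l = \sum_a Al l a * mono (nth 0 s k) (mon a).
  move=> k l; rewrite mxE; apply: eq_bigr => a _; rewrite !mxE /wd mon_widen mulrC //.
have shift : forall e : nat * nat, (e.1 + e.2 <= 1)%N -> forall k l : 'I_r,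
    mono (nth 0 s k) e * G k l = mono (nth 0 s l) e * G l k.
  move=> e he.
  have key : forall k l : 'I_r, \sum_c \sum_a Al k a * Al l c *
      gamma ((mon a).1 + (mon c).1 + e.1)%N ((mon a).2 + (mon c).2 + e.2)%N
      = mono (nth 0 s k) e * G k l.
    move=> k l; rewrite hG mulr_sumr; apply: eq_bigr => c _.
    have [b' hb'] : exists b' : 'I_(mdim n.+1), mon b' = ((mon c).1 + e.1, (mon c).2 + e.2)%N.
      by apply: mon_ex; have := @mon_deg n c; lia.
    have H := hZW k b'; rewrite !mxE hb' monoD /= in H.
    rewrite [RHS](_ : _ = Al l c * (mono (nth 0 s k) (mon c) * mono (nth 0 s k) e)); last by ring.
    rewrite H mulr_sumr; apply: eq_bigr => a _; rewrite !addnA; ring.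
  move=> k l; rewrite -!key exchange_big /=; apply: eq_bigr => c _; apply: eq_bigr => a _.
  by rewrite (mulrC (Al k c)); congr (_ * gamma _ _); lia.
have Gsym : forall k l : 'I_r, G k l = G l k.
  by move=> k l; have := shift (0, 0)%N isT k l; rewrite /mono !expr0 !mul1r.
have Goff : forall k l : 'I_r, k != l -> G k l = 0.
  move=> k l hkl.
  have hne : nth 0 s k != nth 0 s l by rewrite nth_uniq.
  have gen : forall e : nat * nat, (e.1 + e.2 <= 1)%N ->
      mono (nth 0 s k) e != mono (nth 0 s l) e -> G k l = 0.
    move=> e he hd; have := shift e he k l; rewrite -(Gsym k l) => /eqP.
    rewrite -subr_eq0 -mulrBl mulf_eq0 subr_eq0 (negbTE hd) /= => /eqP //.
  case: (eqVneq (nth 0 s k).1 (nth 0 s l).1) => h1.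
    case: (eqVneq (nth 0 s k).2 (nth 0 s l).2) => h2.
      by move: hne; rewrite [nth 0 s k]surjective_pairing [nth 0 s l]surjective_pairing h1 h2 eqxx.
    by apply: (gen (0, 1)%N) => //; rewrite /mono /= !expr0 !expr1 !mul1r.
  by apply: (gen (1, 0)%N) => //; rewrite /mono /= !expr0 !expr1 !mulr1.
set A : 'M[R]_(r, mdim n.+1) := Al *m rowsub (wd n) 1%:M.
have hZA : Z = A *m M1 by rewrite hAl /W rowsubE mulmxA.
have hGA : G = Z *m A^T.
  rewrite /A trmx_mul mulmxA; congr (_ *m _).
  have -> : (rowsub (wd n) (1%:M : 'M[R]_(mdim n.+1)))^T = colsub (wd n) 1%:M.
    by apply/matrixP => i j; rewrite !mxE eq_sym.
  by rewrite mulmx_colsub mulmx1.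
have Gkk : forall k : 'I_r, 0 < G k k.
  move=> k; set x := (row k A)^T.
  have hq : (x^T *m M1 *m x) 0 0 = G k k.
    rewrite /x trmxK -row_mul -hZA hGA !mxE; apply: eq_bigr => j _; rewrite !mxE //.
  rewrite lt0r -hq; case: hpsd => hs hp; rewrite hp andbT; apply/eqP => h0.
  have hk := psd_ker _ _ _ (conj hs hp) h0.
  have : row k Z = 0.
    by rewrite hZA row_mul -[row k A]trmxK -/x -hs -trmx_mul hk; apply/matrixP => i j; rewrite !mxE.
  have [a0 ha0] := mon0_ex n.+1.
  move/matrixP => /(_ 0 a0); rewrite !mxE ha0 /mono !expr0 mulr1 => /eqP; rewrite oner_eq0 //.
clearbody G.
set D : 'M[R]_r := diag_mx (\row_k (G k k)^-1).
have hDG : D *m G = 1%:M.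
  apply/matrixP => k l; rewrite mul_diag_mx !mxE.
  case: (eqVneq k l) => [->|h]; first by rewrite mulVf // gt_eqF.
  by rewrite (Goff k l h) mulr0.
have [_ hGu] := mulmx1_unit hDG.
have hrG : \rank G = r by rewrite (mxrank_unit hGu).
have hZM : (Z <= M1)%MS by rewrite hZA submxMl.
have hM1Z : (M1 <= Z)%MS.
  apply: (sup_of_rank _ _ _ _ _ hZM); rewrite -hsz -/r -{1}hrG hGA; exact: mxrankM_maxl.
have [B hB] := submxP hM1Z.
have hM1T : M1 = Z^T *m B^T by rewrite -trmx_mul -hB /M1 moment_sym.
have hGT : G^T = G by apply/matrixP => k l; rewrite mxE Gsym.
have hZG : Z = G *m B^T.
  by rewrite {1}hZA {1}hM1T mulmxA -[A *m Z^T]trmxK trmx_mul trmxK -hGA hGT.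
have hBT : B^T = D *m Z by rewrite hZG mulmxA hDG mul1mx.
exists (fun k => (G k k)^-1); split; first by move=> k; rewrite invr_gt0.
move=> a b; rewrite hM1T hBT mxE; apply: eq_bigr => k _.
by rewrite mul_diag_mx !mxE; ring.
Qed.


Local Open Scope ereal_scope.

Lemma msing (w : R * R) : measurable [set w].
Proof.
have -> : [set w] = [set w.1] `*` [set w.2].
  apply/seteqP; split => [x /= ->|[x1 x2] /= [-> ->]] //; by case: w.
by apply: measurableX; apply: measurable_set1.
Qed.

Lemma mseq (s : seq (R * R)) : measurable [set` s].
Proof.
elim: s => [|a s ih]; first by have -> : [set` [::]] = set0 :> set (R * R) by apply/seteqP; split => x.
have -> : [set` a :: s] = [set a] `|` [set` s].
  apply/seteqP; split => x /=.
    by rewrite inE => /orP [/eqP ->|h]; [left|right].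
  by case=> [->|h]; rewrite inE ?eqxx ?h ?orbT.
by apply: measurableU => //; exact: msing.
Qed.


Lemma fin_int (mu : {measure set (R * R) -> \bar R}) (s : seq (R * R)) (g : R * R -> R) :
  uniq s -> mu (~` [set` s]) = 0 -> (forall w, w \in s -> mu [set w] \is a fin_num) ->
  measurable_fun setT g ->
  \int[mu]_x (g x)%:E = (\sum_(w <- s) g w * fine (mu [set w]))%:E.
Proof.
move=> hu hN hfin0 hg.
have mN : measurable (~` [set` s]) by apply: measurableC; exact: mseq.
have hfin : forall w, mu [set w] \is a fin_num.
  move=> w; case: (boolP (w \in s)) => hw; first exact: hfin0.
  have : mu [set w] <= mu (~` [set` s]).
    apply: le_measure; rewrite ?inE //; first exact: msing.
    by move=> x /= ->; apply/negP.
  rewrite hN => h0; have -> : mu [set w] = 0 by apply/eqP; rewrite eq_le h0 measure_ge0.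
  by [].
have hind : forall w, mu.-integrable setT (fun x => (\1_[set w] x)%:E).
  move=> w; apply/integrableP; split.
    by apply/measurable_EFinP; apply: measurable_realfun.measurable_indic; exact: msing.
  under eq_integral do rewrite gee0_abs ?lee_fin //.
  by rewrite integral_indic ?setIT -?ge0_fin_numE ?measure_ge0 //; exact: msing.
pose h x := (\sum_(w <- s) g w * \1_[set w] x)%R.
have mh : measurable_fun setT h.
  apply: measurable_sum => w; apply: measurable_funM => //.
  by apply: measurable_realfun.measurable_indic; exact: msing.
have -> : \int[mu]_x (g x)%:E = \int[mu]_x (h x)%:E.
  apply: ae_eq_integral => //; try by apply/measurable_EFinP.
  exists (~` [set` s]); split => // x /= /not_implyP [_ hx] xs; apply: hx; congr EFin.
  rewrite /h (bigD1_seq x) //= indicE mem_set // mulr1 big1_seq ?addr0 //.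
  by move=> w /andP [hwx _]; rewrite indicE memNset ?mulr0 //= => e; move: hwx; rewrite e eqxx.
have hint : forall w, mu.-integrable setT (fun x => (g w * \1_[set w] x)%:E).
  move=> w; apply: (eq_integrable measurableT _ _ _ (integrableZl measurableT (g w) (hind w))).
  by move=> x _; rewrite EFinM.
under eq_integral do rewrite /h -sumEFin.
rewrite (integral_sum measurableT hint).
rewrite -sumEFin; apply: eq_bigr => w _.
under eq_integral do rewrite EFinM.
rewrite (integralZl measurableT (hind w)) integral_indic; last exact: msing.
rewrite setIT EFinM fineK //. all: try exact: measurableT.
Qed.


Lemma fin_integrable (mu : {measure set (R * R) -> \bar R}) (s : seq (R * R)) (g : R * R -> R) :
  uniq s -> mu (~` [set` s]) = 0 -> (forall w, w \in s -> mu [set w] \is a fin_num) ->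
  measurable_fun setT g -> mu.-integrable setT (fun x => (g x)%:E).
Proof.
move=> hu hN hfin hg; apply/integrableP; split; first by apply/measurable_EFinP.
under eq_integral do rewrite abse_EFin.
rewrite (fin_int mu s (fun x => `|g x|%R) hu hN hfin) ?ltry //.
exact: measurableT_comp.
Qed.

Lemma mono_meas (e : nat * nat) : measurable_fun setT (fun p : R * R => mono p e).
Proof.
rewrite /mono; apply: measurable_funM; apply: measurable_funX.
  exact: measurable_fst.
exact: measurable_snd.
Qed.

Definition wmeas (s : seq (R * R)) (rho : nat -> R) (h : forall i, (0 <= rho i)%R) :=
  msum (fun i => mscale (NngNum (h i)) (\d_(nth 0%R s i))) (size s).

Lemma wmeasE s rho h A : wmeas s rho h A = (\sum_(i < size s) rho i * (nth 0%R s i \in A)%:R)%:E.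
Proof.
rewrite /wmeas /msum -sumEFin; apply: eq_bigr => i _.
change ((rho i)%:E * (\1_A (nth 0%R s i))%:E = (rho i * (nth 0%R s i \in A)%:R)%:E).
by rewrite indicE -EFinM.
Qed.



Lemma wmeas1 s rho h (k : 'I_(size s)) : uniq s ->
  wmeas s rho h [set nth 0%R s k] = (rho k)%:E.
Proof.
move=> hu; rewrite wmeasE (bigD1 k) //= mem_set // mulr1 big1 ?addr0 // => i hik.
rewrite memNset ?mulr0 //= => /eqP; rewrite nth_uniq //; exact/negP.
Qed.

Lemma wmeasC s rho h : wmeas s rho h (~` [set` s]) = 0.
Proof.
rewrite wmeasE big1 // => i _; rewrite memNset ?mulr0 //= => /(_ (mem_nth _ (ltn_ord i))) //.
Qed.


Local Close Scope ereal_scope.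

Lemma trP n : (rowsub (wd n) (1%:M : 'M[R]_(mdim n.+1)))^T = colsub (wd n) 1%:M.
Proof. by apply/matrixP => i j; rewrite !mxE eq_sym. Qed.

Lemma sub_moment n (beta gamma : nat -> nat -> R) :
  (forall i j, (i + j <= 2 * n)%N -> gamma i j = beta i j) ->
  let P := rowsub (wd n) (1%:M : 'M[R]_(mdim n.+1)) in
  P *m moment_matrix n.+1 gamma *m P^T = moment_matrix n beta.
Proof.
move=> hgb P; rewrite /P trP mulmx_colsub mulmx1 -rowsubE.
apply/matrixP => a b; rewrite !mxE /wd !mon_widen; apply: hgb.
by have := @mon_deg n a; have := @mon_deg n b; lia.
Qed.

Lemma var_sub n (beta gamma : nat -> nat -> R) :
  (forall i j, (i + j <= 2 * n)%N -> gamma i j = beta i j) ->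
  psd (moment_matrix n.+1 gamma) ->
  variety (moment_matrix n.+1 gamma) `<=` variety (moment_matrix n beta).
Proof.
move=> hgb hpsd p hp c hc.
set P := rowsub (wd n) (1%:M : 'M[R]_(mdim n.+1)).
have hq : ((P^T *m c)^T *m moment_matrix n.+1 gamma *m (P^T *m c)) 0 0 = 0.
  rewrite trmx_mul trmxK !mulmxA -(mulmxA _ P) -(mulmxA _ (P *m _)) (sub_moment _ _ _ hgb).
  by rewrite -mulmxA hc mulmx0 mxE.
have := hp _ (psd_ker _ _ _ hpsd hq).
rewrite !peval_zv -!surjective_pairing mulmxA -trmx_mul.
suff -> : P *m zv n.+1 p = zv n p by [].
rewrite /P -rowsubE; apply/matrixP => a b; rewrite !mxE /wd mon_widen //.
Qed.


Lemma split_deg n i j : (i + j <= 2 * n)%N -> exists i1 j1 i2 j2,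
  [/\ (i1 + j1 <= n.+1)%N, (i2 + j2 <= n.+1)%N, i = (i1 + i2)%N & j = (j1 + j2)%N].
Proof.
move=> h; exists (minn i n), (minn j (n - minn i n)), (i - minn i n)%N, (j - minn j (n - minn i n))%N.
split; lia.
Qed.

Lemma backward n (beta gamma : nat -> nat -> R) (t : seq (R * R)) :
  (forall i j, (i + j <= 2 * n)%N -> gamma i j = beta i j) ->
  psd (moment_matrix n.+1 gamma) ->
  vcard_ge (variety (moment_matrix n.+1 gamma)) (\rank (moment_matrix n.+1 gamma)) ->
  uniq t -> [set` t] = variety (moment_matrix n beta) ->
  size t = \rank (moment_matrix n beta) ->
  exists mu : {measure set (R * R) -> \bar R}, rep_measure n beta mu.
Proof.
move=> hgb hpsd [s [hu hs hsz]] hut ht htsz.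
have hv : forall p, p \in s -> variety (moment_matrix n.+1 gamma) p.
  by move=> p hp; apply: hs.
have hrk : (\rank (moment_matrix n.+1 gamma) <= \rank (moment_matrix n beta))%N.
  rewrite -hsz -htsz; apply: uniq_leq_size => // x hx.
  have : [set` t] x by rewrite ht; apply: (var_sub _ _ _ hgb hpsd); exact: hv.
  by [].
have [rho [hrho hM]] := back_alg _ _ _ _ hgb hpsd hu hv hsz hrk.
pose rn (i : nat) : R := if insub i is Some k then rho k else 0.
have hrn : forall i, 0 <= rn i.
  by move=> i; rewrite /rn; case: insub => [k|] //; apply: ltW.
have hrnk : forall k : 'I_(size s), rn k = rho k by move=> k; rewrite /rn valK.
exists (wmeas s rn hrn) => i j hij.
have hC := wmeasC s rn hrn.
have hfin : forall w, w \in s -> wmeas s rn hrn [set w] \is a fin_num.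
  move=> w hw; have hk : (index w s < size s)%N by rewrite index_mem.
  by have := wmeas1 s rn hrn (Ordinal hk) hu; rewrite /= nth_index // => ->.
split.
  exact: (fin_integrable _ s (fun p => mono p (i, j)) hu hC hfin (mono_meas _)).
rewrite (fin_int _ s (fun p => mono p (i, j)) hu hC hfin (mono_meas _)).
congr EFin.
have [i1 [j1 [i2 [j2 [h1 h2 ei ej]]]]] := split_deg _ _ _ hij.
subst i j.
have [a ha] := mon_ex _ _ _ h1; have [b hb] := mon_ex _ _ _ h2.
rewrite -hgb; last by lia.
have := hM a b; rewrite mxE ha hb /= => ->.
rewrite (big_nth 0) big_mkord; apply: eq_bigr => k _.
have e := wmeas1 s rn hrn k hu; rewrite /wmeas in e; rewrite e /= hrnk (monoD _ (i1, j1) (i2, j2)); ring.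
Qed.


Definition wg (t : seq (R * R)) (rho : R * R -> R) (i j : nat) : R :=
  \sum_(w <- t) rho w * mono w (i, j).

Lemma mm_wg m t rho : moment_matrix m (wg t rho) =
  \sum_(w <- t) rho w *: (zv m w *m (zv m w)^T).
Proof.
apply/matrixP => a b; rewrite mxE summxE; apply: eq_bigr => w _.
by rewrite !mxE big_ord1 !mxE (monoD w (mon a) (mon b)) mulrA.
Qed.

Lemma quad_wg m t rho (x : 'cV_(mdim m)) :
  (x^T *m moment_matrix m (wg t rho) *m x) 0 0 =
  \sum_(w <- t) rho w * ((zv m w)^T *m x) 0 0 ^+ 2.
Proof.
rewrite mm_wg mulmx_sumr mulmx_suml summxE; apply: eq_bigr => w _.
rewrite -scalemxAr -scalemxAl mxE; congr (_ * _).
rewrite !mulmxA -(mulmxA _ _ x) mxE big_ord1 expr2; congr (_ * _).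
have e : forall A : 'M[R]_1, A 0 0 = A^T 0 0 by move=> A; rewrite mxE.
by rewrite [LHS]e trmx_mul trmxK.
Qed.

Lemma psd_wg m t rho : (forall w, w \in t -> 0 <= rho w) ->
  psd (moment_matrix m (wg t rho)).
Proof.
move=> h; split; first exact: moment_sym.
move=> x; rewrite quad_wg big_seq; apply: sumr_ge0 => w hw.
by apply: mulr_ge0; [exact: h | exact: sqr_ge0].
Qed.

Lemma var_wg m t rho w : (forall w, w \in t -> 0 <= rho w) -> w \in t -> 0 < rho w ->
  variety (moment_matrix m (wg t rho)) w.
Proof.
move=> h hw hp c hc.
have : (c^T *m moment_matrix m (wg t rho) *m c) 0 0 = 0 by rewrite -mulmxA hc mulmx0 mxE.
rewrite quad_wg big_seq => /eqP; rewrite psumr_eq0; last first.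
  by move=> v hv; apply: mulr_ge0; [exact: h | exact: sqr_ge0].
move=> /allP /(_ w hw); rewrite hw /= mulf_eq0 gt_eqF //= sqrf_eq0 => /eqP.
by rewrite peval_zv -surjective_pairing.
Qed.

Lemma rank_sum_le k (I : Type) (t : seq I) (F : I -> 'M[R]_k) :
  (forall i, (\rank (F i) <= 1)%N) -> (\rank (\sum_(i <- t) F i)%R <= size t)%N.
Proof.
move=> hF; elim: t => [|a t ih]; first by rewrite big_nil mxrank0.
rewrite big_cons /=.
have h0 := mxrankS (addmx_sub_adds (submx_refl (F a)) (submx_refl (\sum_(i <- t) F i))).
apply: (leq_trans h0).
have [h1 _] := mxrank_adds_leqif (F a) (\sum_(i <- t) F i)%R.
apply: (leq_trans h1); rewrite -add1n; exact: leq_add.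
Qed.

Lemma rank_wg m t rho :
  (\rank (moment_matrix m (wg t rho)) <= size [seq w <- t | rho w != 0%R])%N.
Proof.
rewrite mm_wg (bigID (fun w => rho w != 0)) /= [X in _ + X]big1 ?addr0; last first.
  by move=> w /negPn /eqP ->; rewrite scale0r.
rewrite -big_filter; apply: rank_sum_le => w.
apply: (leq_trans (mxrankS (scalemx_sub _ (submx_refl _)))).
apply: (leq_trans (mxrankM_maxr _ _)); exact: rank_leq_row.
Qed.


Lemma quad_exp n (A : 'M[R]_(mdim n)) p :
  ((zv n p)^T *m A *m zv n p) 0 0 =
  \sum_a \sum_b A a b * mono p ((mon a).1 + (mon b).1, (mon a).2 + (mon b).2)%N.
Proof.
rewrite mxE exchange_big /=; apply: eq_bigr => b _.
rewrite mxE mulr_suml; apply: eq_bigr => a _.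
by rewrite !mxE (monoD p (mon a) (mon b)) /mono; ring.
Qed.

Lemma quad_meas n (A : 'M[R]_(mdim n)) :
  measurable_fun setT (fun p => ((zv n p)^T *m A *m zv n p) 0 0).
Proof.
rewrite (_ : (fun p => _) = (fun p => \sum_a \sum_b A a b *
   mono p ((mon a).1 + (mon b).1, (mon a).2 + (mon b).2)%N)); last first.
  by apply: boolp.funext => p; rewrite quad_exp.
apply: measurable_sum => a; apply: measurable_sum => b.
by apply: measurable_funM => //; exact: mono_meas.
Qed.

Lemma int_quad n (beta : nat -> nat -> R) (mu : {measure set (R * R) -> \bar R})
    (A : 'M[R]_(mdim n)) : rep_measure n beta mu ->
  (\int[mu]_p (((zv n p)^T *m A *m zv n p) 0 0)%:E =
   (\sum_a \sum_b A a b * moment_matrix n beta a b)%:E)%E.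
Proof.
move=> hrep.
have hd : forall a b : 'I_(mdim n), ((mon a).1 + (mon b).1 + ((mon a).2 + (mon b).2) <= 2 * n)%N.
  by move=> a b; have := @mon_deg n a; have := @mon_deg n b; lia.
have hi : forall a b : 'I_(mdim n), mu.-integrable setT (fun p =>
    (A a b * mono p ((mon a).1 + (mon b).1, (mon a).2 + (mon b).2)%N)%:E).
  move=> a b; have [hI _] := hrep _ _ (hd a b).
  apply: (eq_integrable measurableT _ _ _ (integrableZl measurableT (A a b) hI)).
  by move=> x _; rewrite EFinM.
have hi2 : forall a : 'I_(mdim n), mu.-integrable setT (fun p => \sum_b
    (A a b * mono p ((mon a).1 + (mon b).1, (mon a).2 + (mon b).2)%N)%:E).
  by move=> a; apply: (integrable_sum measurableT) => b _; exact: hi.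
under eq_integral do rewrite quad_exp -sumEFin.
under eq_integral do under eq_bigr do rewrite -sumEFin.
rewrite (integral_sum measurableT hi2) -sumEFin; apply: eq_bigr => a _.
rewrite (integral_sum measurableT (hi a)) -sumEFin; apply: eq_bigr => b _.
have [hI hE] := hrep _ _ (hd a b).
under eq_integral do rewrite EFinM.
by rewrite (integralZl measurableT hI) hE -EFinM mxE.
Qed.

Lemma coker_tr0 n (beta : nat -> nat -> R) :
  let M0 := moment_matrix n beta in
  let C := cokermx M0 in
  \sum_a \sum_b (C *m C^T) a b * M0 a b = 0.
Proof.
move=> M0 C.
have -> : \sum_a \sum_b (C *m C^T) a b * M0 a b = \tr ((C *m C^T)^T *m M0).
  rewrite /mxtrace exchange_big /=; apply: eq_bigr => b _; rewrite mxE.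
  by apply: eq_bigr => a _; rewrite [(_ ^T) b a]mxE.
rewrite trmx_mul trmxK -mulmxA.
have -> : C^T *m M0 = 0.
  have hs : M0^T = M0 := moment_sym n beta.
  by rewrite -hs -trmx_mul /C mulmx_coker; apply/matrixP => i j; rewrite !mxE.
by rewrite mulmx0 mxtrace0.
Qed.


Lemma null_compl n (beta : nat -> nat -> R) (mu : {measure set (R * R) -> \bar R})
    (t : seq (R * R)) :
  rep_measure n beta mu -> [set` t] = variety (moment_matrix n beta) ->
  mu (~` [set` t]) = 0%E.
Proof.
move=> hrep ht.
set M0 := moment_matrix n beta; set C := cokermx M0; set A := C *m C^T.
pose f p := ((zv n p)^T *m A *m zv n p) 0 0.
have hf : forall p, f p = ((C^T *m zv n p)^T *m (C^T *m zv n p)) 0 0.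
  by move=> p; rewrite /f /A (trmx_mul (C^T) (zv n p)) trmxK !mulmxA.
have hf0 : forall p, 0 <= f p.
  move=> p; rewrite hf mxE; apply: sumr_ge0 => i _; rewrite mxE -expr2; exact: sqr_ge0.
have hfz : forall p, f p = 0 -> [set` t] p.
  move=> p; rewrite hf => /sumsq_eq0 h0; rewrite ht variety_sub submxE.
  rewrite /C in h0; by apply/eqP; rewrite -[cokermx M0]trmxK -trmx_mul h0; apply/matrixP => i j; rewrite !mxE.
have mf : measurable_fun setT (fun p => (f p)%:E).
  by apply/measurable_EFinP; exact: quad_meas.
have hint : (\int[mu]_p `|(f p)%:E| = 0)%E.
  under eq_integral do rewrite abse_EFin ger0_norm ?hf0 //.
  by rewrite (int_quad _ _ _ _ hrep) coker_tr0.
have [N [mN N0 hN]] := (ae_eq_integral_abs mu measurableT mf).1 hint.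
apply/eqP; rewrite eq_le measure_ge0 andbT -N0; apply: le_measure; rewrite ?inE //.
  by apply: measurableC; exact: mseq.
move=> x hx; apply: hN => /= hfx; apply: hx; apply: hfz.
by have := hfx I; case.
Qed.


Lemma forward n (beta : nat -> nat -> R) (mu : {measure set (R * R) -> \bar R})
    (t : seq (R * R)) :
  uniq t -> [set` t] = variety (moment_matrix n beta) -> rep_measure n beta mu ->
  exists gamma : nat -> nat -> R,
      [/\ forall i j : nat, (i + j <= 2 * n)%N -> gamma i j = beta i j,
          psd (moment_matrix n.+1 gamma)
        & vcard_ge (variety (moment_matrix n.+1 gamma))
                  (\rank (moment_matrix n.+1 gamma))].
Proof.
move=> hut ht hrep.
have hN := null_compl _ _ _ _ hrep ht.
have hT : mu setT = (beta 0 0)%:E.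
  have [_ h] := hrep 0%N 0%N isT.
  rewrite -h (eq_integral (cst 1%E)); last by move=> x _; rewrite !expr0 mulr1.
  by rewrite integral_cst // mul1e.
have hfin : forall w, mu [set w] \is a fin_num.
  move=> w; rewrite ge0_fin_numE ?measure_ge0 //.
  apply: (le_lt_trans (y := mu setT)); last by rewrite hT ltry.
  by apply: le_measure; rewrite ?inE //; exact: msing.
pose rho w := fine (mu [set w]).
have hrho : forall w, w \in t -> 0 <= rho w by move=> w _; apply: fine_ge0; exact: measure_ge0.
exists (wg t rho); split.
- move=> i j hij; have [_ hE] := hrep _ _ hij.
  rewrite (fin_int mu t (fun p => mono p (i, j)) hut hN (fun w _ => hfin w) (mono_meas _)) in hE.
  case: hE => <-; rewrite /wg; apply: eq_bigr => w _; exact: mulrC.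
- exact: psd_wg.
set tp := [seq w <- t | rho w != 0].
have hk := rank_wg n.+1 t rho.
exists (take (\rank (moment_matrix n.+1 (wg t rho))) tp); split.
- by apply: take_uniq; apply: filter_uniq.
- move=> x /= /mem_take; rewrite mem_filter => /andP [hx0 hx].
  apply: var_wg => //; rewrite lt0r hx0 /=; exact: hrho.
- by rewrite size_takel.
Qed.

End Mat.

Theorem corollary3p2 (R : realType) (n : nat) (beta : nat -> nat -> R) :
  (1 <= n)%N ->
  vcard_eq (variety (moment_matrix n beta)) (\rank (moment_matrix n beta)) ->
  ((exists mu : {measure set (R * R) -> \bar R}, rep_measure n beta mu) <->
   (exists gamma : nat -> nat -> R,
      [/\ forall i j : nat, (i + j <= 2 * n)%N -> gamma i j = beta i j,
          psd (moment_matrix n.+1 gamma)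
        & vcard_ge (variety (moment_matrix n.+1 gamma))
                  (\rank (moment_matrix n.+1 gamma))])).
Proof.
move=> _ [t [hut ht htsz]]; split.
  by case=> mu hmu; exact: (forward _ _ _ _ _ hut ht hmu).
by case=> gamma [hgb hpsd hge]; exact: (backward _ _ _ _ _ hgb hpsd hge hut ht htsz).
Qed.
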